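(* Let $x=(x_1,\dots,x_n)$ and $y=(y_1,\dots,y_n)$ be indeterminates, and let $\phi:\mathbb{R}(y)\to\mathbb{R}(x)$ and $\psi:\mathbb{R}(x)\to\mathbb{R}(y)$ be mutually inverse $\mathbb{R}$-algebra isomorphisms of rational function fields (an invertible rational change of variables, $\phi(y_j)=\phi_j(x)$, $\psi(x_i)=\psi_i(y)$). For an integer matrix $A\in M_{r\times n}(\mathbb{Z})$ and $\lambda\in\mathbb{T}^r$, write $(\lambda\star f)(x)=f(\lambda^A*x)$ for $f\in\mathbb{R}(x)$. Say $A$ is dimensionally consistent with $\phi$ if for every $j$ there is $\beta_j\in\mathbb{Z}^r$ with $\lambda\star\phi(y_j)=\lambda^{\beta_j}\phi(y_j)$ for all $\lambda\in\mathbb{T}^r$; define analogously, for $B\in M_{r'\times n}(\mathbb{Z})$ acting on $\mathbb{R}(y)$ by $(\mu\bullet g)(y)=g(\mu^B*y)$, when $B$ is dimensionally consistent with $\psi$ (each $\psi(x_i)$ is scaled by a monomial character of $\mu$). Then: (1) The maximum of $\operatorname{rank}A$ over all integer matrices $A$ (with $n$ columns) dimensionally consistent with $\phi$ equals the maximum of $\operatorname{rank}B$ over all integer matrices $B$ dimensionally consistent with $\psi$. (2) Let $F_1,\dots,F_s\in\mathbb{R}(x)$ and $H_l=\psi(F_l)\in\mathbb{R}(y)$. Then the maximum of $\operatorname{rank}A$ over all $A$ dimensionally consistent with $\phi$ and fixing every $F_l$ (i.e. $\lambda\star F_l=F_l$ for all $\lambda,l$) equals the maximum of $\operatorname{rank}B$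 over all $B$ dimensionally consistent with $\psi$ and fixing every $H_l$. Consequently (Theorem on changes of variables): if two ODE systems are linked by an invertible rational change of variables, the maximal scaling symmetry of each system that also makes the change of variables dimensionally consistent has the same rank for both systems.
   Context: $\mathbb{T}^r$ is the group $(\mathbb{R}\setminus\{0\})^r$ under componentwise multiplication. For $a\in\mathbb{Z}^r$, $\lambda^a=\prod_k\lambda_k^{a_k}$; for a matrix $A$ with columns $A_1,\dots,A_n$, $\lambda^A=(\lambda^{A_1},\dots,\lambda^{A_n})$ and $\lambda^A*x=(\lambda^{A_1}x_1,\dots,\lambda^{A_n}x_n)$. The rank of a scaling matrix is the dimension of the scaling action. For an ODE system written as $\frac{dz}{dt}=\frac{z*F(t,z,c)}{t}$ with all quantities (time, dependent variables, parameters) listed as $x_1,\dots,x_n$, a scaling matrix is a scaling symmetry exactly when it fixes the rational functions $F_l$; the second system is obtained by rewriting the $F_l$ in the new quantities, i.e. as $H_l=\psi(F_l)$. *)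

(* Defs.v *)
From HB Require Import structures.
From mathcomp Require Import all_boot all_order all_algebra.
From mathcomp Require Import mpoly fraction.
From Stdlib Require Import Rdefinitions.
From mathcomp Require Import Rstruct.

Set Implicit Arguments.
Unset Strict Implicit.
Unset Printing Implicit Defensive.

Import Order.TTheory GRing.Theory Num.Theory.
Local Open Scope ring_scope.

Definition RF (n : nat) : Type := {fraction {mpoly R[n]}}.

Definition tof (n : nat) (p : {mpoly R[n]}) : RF n := FracField.tofrac p.

Definition cst (n : nat) (c : R) : RF n := tof (c%:MP).

Definition var (n : nat) (i : 'I_n) : RF n := tof 'X_i.

Definition monchar (r : nat) (lam : 'I_r -> R) (a : 'I_r -> int) : R :=
  \prod_(k < r) (lam k) ^ (a k).

Definition in_torus (r : nat) (lam : 'I_r -> R) : Prop :=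
  forall k, lam k != 0.

Definition colchar (r n : nat) (A : 'M[int]_(r, n)) (lam : 'I_r -> R)
  (i : 'I_n) : R := monchar lam (fun k => A k i).

Definition mscale (r n : nat) (A : 'M[int]_(r, n)) (lam : 'I_r -> R)
  (p : {mpoly R[n]}) : {mpoly R[n]} :=
  mmap (@mpolyC n R) (fun i => (colchar A lam i)%:MP * 'X_i) p.

Definition fscale (r n : nat) (A : 'M[int]_(r, n)) (lam : 'I_r -> R)
  (f : RF n) : RF n :=
  let q := repr f in
  tof (mscale A lam \n_q) / tof (mscale A lam \d_q).

Definition dim_consistent (n r : nat) (phi : RF n -> RF n)
  (A : 'M[int]_(r, n)) : Prop :=
  forall j : 'I_n, exists beta : 'I_r -> int,
    forall lam : 'I_r -> R, in_torus lam ->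
      fscale A lam (phi (var j)) = cst n (monchar lam beta) * phi (var j).

Definition fixes_all (n r s : nat) (A : 'M[int]_(r, n)) (F : 'I_s -> RF n)
  : Prop :=
  forall lam : 'I_r -> R, in_torus lam -> forall l, fscale A lam (F l) = F l.

Definition zrank (r n : nat) (A : 'M[int]_(r, n)) : nat :=
  \rank (map_mx (fun z : int => z%:~R : rat) A).

Definition is_max_rank (n : nat) (P : forall r : nat, 'M[int]_(r, n) -> Prop)
  (k : nat) : Prop :=
  (exists (r : nat) (A : 'M[int]_(r, n)), P r A /\ zrank A = k) /\
  (forall (r : nat) (A : 'M[int]_(r, n)), P r A -> leq (zrank A) k).

(* Main.v *)
Require Import Defs.
From HB Require Import structures.
From mathcomp Require Import all_boot all_order all_algebra.
From mathcomp Require Import mpoly fraction generic_quotient.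
From Stdlib Require Import Rdefinitions Rfunctions Rpower Exp_prop.
From mathcomp Require Import Rstruct zify.
Import Order.TTheory GRing.Theory Num.Theory.
Set Implicit Arguments.
Unset Strict Implicit.
Unset Printing Implicit Defensive.
Local Open Scope ring_scope.

Lemma fracE (T : idomainType) (f : {fraction T}) :
  f = FracField.tofrac (\n_(repr f)) / FracField.tofrac (\d_(repr f)).
Proof.
rewrite -[f in LHS]reprK; set x := repr f.
have hd := denom_ratioP x.
rewrite -[x in LHS]Ratio_numden.
rewrite /FracField.tofrac; unlock. change ((\pi_{fraction T} (Ratio \n_x \d_x))%qT = FracField.mul (\pi_{fraction T} (Ratio \n_x 1))%qT (FracField.inv (\pi_{fraction T} (Ratio \d_x 1))%qT)).
rewrite -FracField.pi_inv -FracField.pi_mul.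
apply/eqmodP => /=. rewrite FracField.equivfE.
rewrite /FracField.mulf /FracField.invf.
rewrite !numden_Ratio ?oner_neq0 ?mulf_neq0 ?oner_neq0 //.
by rewrite mulr1 mul1r mulrC.
Qed.

Lemma poly_uniq n (T : nzRingType) (g1 g2 : {mpoly R[n]} -> T) :
  (forall p q, g1 (p + q) = g1 p + g1 q) -> (forall p q, g1 (p * q) = g1 p * g1 q) ->
  (forall p q, g2 (p + q) = g2 p + g2 q) -> (forall p q, g2 (p * q) = g2 p * g2 q) ->
  (forall c, g1 c%:MP = g2 c%:MP) -> (forall i, g1 'X_i = g2 'X_i) ->
  forall p, g1 p = g2 p.
Proof.
move=> g1D g1M g2D g2M hc hX.
elim/mpolyind => [|c m p _ _ IH]; first by rewrite -mpolyC0 hc.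
rewrite g1D g2D IH; congr (_ + _).
rewrite -mul_mpolyC g1M g2M hc; congr (_ * _).
rewrite mpolyXE_id.
apply: (big_ind (fun x => g1 x = g2 x)); first by rewrite -mpolyC1 hc.
  by move=> x y hx hy; rewrite g1M g2M hx hy.
move=> i _; elim: (m i) => [|k IHk]; first by rewrite !expr0 -mpolyC1 hc.
by rewrite !exprS g1M g2M IHk hX.
Qed.

Definition fmor n (g : RF n -> RF n) :=
  [/\ forall x y, g (x + y) = g x + g y, forall x y, g (x * y) = g x * g y,
      g 1 = 1 & forall c, g (cst n c) = cst n c].

Lemma fmorV n (g : RF n -> RF n) : fmor g -> forall x, x != 0 -> g (x^-1) = (g x)^-1.
Proof.
case=> _ gM g1 _ x hx; apply/esym/mulr1_eq.
by rewrite -gM mulfV.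
Qed.

Lemma fmor_uniq n (g1 g2 : RF n -> RF n) : fmor g1 -> fmor g2 ->
  (forall i, g1 (var i) = g2 (var i)) -> forall f, g1 f = g2 f.
Proof.
move=> h1 h2 hX f.
have key : forall p, g1 (tof p) = g2 (tof p).
  apply: (@poly_uniq n (RF n) (fun p => g1 (tof p)) (fun p => g2 (tof p))).
  - by case: h1 => g1D _ _ _ p q; rewrite /tof rmorphD g1D.
  - by case: h1 => _ g1M _ _ p q; rewrite /tof rmorphM g1M.
  - by case: h2 => g2D _ _ _ p q; rewrite /tof rmorphD g2D.
  - by case: h2 => _ g2M _ _ p q; rewrite /tof rmorphM g2M.
  - move=> c; case: h1 => _ _ _ c1; case: h2 => _ _ _ c2.
    by have := c1 c; have := c2 c; rewrite /cst => -> ->.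
  - exact: hX.
rewrite (fracE f).
have hd : tof (\d_(repr f)) != 0 by rewrite /tof tofrac_eq0 denom_ratioP.
case: (h1) => _ g1M _ _; case: (h2) => _ g2M _ _.
rewrite g1M g2M (fmorV h1 hd) (fmorV h2 hd).
by have := key (\n_(repr f)); have := key (\d_(repr f)); rewrite /tof => -> ->.
Qed.

Lemma fmor_comp n (g1 g2 : RF n -> RF n) : fmor g1 -> fmor g2 -> fmor (fun x => g1 (g2 x)).
Proof.
case=> a1 b1 c1 d1 [a2 b2 c2 d2]; split.
- by move=> x y; rewrite a2 a1.
- by move=> x y; rewrite b2 b1.
- by rewrite c2 c1.
- by move=> c; rewrite d2 d1.
Qed.

Lemma fmor_rmorph n (g : {rmorphism RF n -> RF n}) :
  (forall c, g (cst n c) = cst n c) -> fmor g.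
Proof. by move=> hc; split => //; [exact: rmorphD | exact: rmorphM | exact: rmorph1]. Qed.

Lemma mscaleD r n (A : 'M[int]_(r, n)) lam p q :
  mscale A lam (p + q) = mscale A lam p + mscale A lam q.
Proof. exact: rmorphD. Qed.
Lemma mscaleM r n (A : 'M[int]_(r, n)) lam p q :
  mscale A lam (p * q) = mscale A lam p * mscale A lam q.
Proof. exact: rmorphM. Qed.
Lemma mscaleC r n (A : 'M[int]_(r, n)) lam c :
  mscale A lam c%:MP = c%:MP.
Proof. by rewrite /mscale mmapC. Qed.
Lemma mscaleX r n (A : 'M[int]_(r, n)) lam i :
  mscale A lam 'X_i = (colchar A lam i)%:MP * 'X_i.
Proof. by rewrite /mscale mmapX mmap1U. Qed.

Lemma colchar_neq0 r n (A : 'M[int]_(r, n)) lam i :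
  in_torus lam -> colchar A lam i != 0.
Proof.
move=> ht; rewrite /colchar /monchar prodf_seq_neq0.
by apply/allP => k _; rewrite expfz_eq0 negb_and ht orbT.
Qed.

Lemma colcharV r n (A : 'M[int]_(r, n)) lam i :
  colchar A (fun k => (lam k)^-1) i = (colchar A lam i)^-1.
Proof.
rewrite /colchar /monchar -prodfV; apply: eq_bigr => k _.
by rewrite expfV.
Qed.

Lemma mscale_inj r n (A : 'M[int]_(r, n)) lam :
  in_torus lam -> injective (mscale A lam).
Proof.
move=> ht.
have K : forall p, mscale A (fun k => (lam k)^-1) (mscale A lam p) = p.
  apply: (@poly_uniq n _ (fun p => mscale A (fun k => (lam k)^-1) (mscale A lam p)) id).
  - by move=> p q; rewrite !mscaleD.
  - by move=> p q; rewrite !mscaleM.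
  - by [].
  - by [].
  - by move=> c; rewrite !mscaleC.
  - move=> i; rewrite mscaleX mscaleM mscaleC mscaleX colcharV mulrA -mpolyCM.
    by rewrite mulfV ?colchar_neq0 // mpolyC1 mul1r.
exact: can_inj K.
Qed.

Lemma tof_eq0 n (p : {mpoly R[n]}) : (tof p == 0) = (p == 0).
Proof. by rewrite /tof tofrac_eq0. Qed.

Lemma tofM n (p q : {mpoly R[n]}) : tof (p * q) = tof p * tof q.
Proof. exact: rmorphM. Qed.
Lemma tofD n (p q : {mpoly R[n]}) : tof (p + q) = tof p + tof q.
Proof. exact: rmorphD. Qed.
Lemma tof1 n : tof (1 : {mpoly R[n]}) = 1.
Proof. exact: rmorph1. Qed.

Lemma fscale_frac r n (A : 'M[int]_(r, n)) lam a b :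
  in_torus lam -> b != 0 ->
  fscale A lam (tof a / tof b) = tof (mscale A lam a) / tof (mscale A lam b).
Proof.
move=> ht hb.
have Mnz : forall p, p != 0 -> mscale A lam p != 0.
  move=> p hp; apply: contra hp => /eqP h.
  by apply/eqP; apply: (mscale_inj (A := A) ht); rewrite h /mscale rmorph0.
rewrite /fscale; set q := repr _.
have hq : \d_q != 0 := denom_ratioP q.
have E : tof a / tof b = tof \n_q / tof \d_q by rewrite /q /tof -fracE.
have : a * \d_q = \n_q * b.
  apply/eqP; rewrite -(@tofrac_eq _ (a * _)) !rmorphM /=.
  rewrite -eqr_div ?tofrac_eq0 //; exact/eqP.
move/(congr1 (mscale A lam)); rewrite !mscaleM => H.
apply/eqP; rewrite eqr_div ?tof_eq0 ?Mnz //.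
by rewrite -!tofM H.
Qed.

Lemma fscale_fmor r n (A : 'M[int]_(r, n)) lam :
  in_torus lam -> fmor (fscale A lam).
Proof.
move=> ht.
have Mnz : forall p, p != 0 -> mscale A lam p != 0.
  move=> p hp; apply: contra hp => /eqP h.
  by apply/eqP; apply: (mscale_inj (A := A) ht); rewrite h /mscale rmorph0.
have dnz : forall f : RF n, \d_(repr f) != 0 := fun f => denom_ratioP _.
have tnz : forall p : {mpoly R[n]}, p != 0 -> tof p != 0 by move=> p; rewrite tof_eq0.
split.
- move=> x y; rewrite (fracE x) (fracE y) -!/(tof _).
  set a1 := \n_(repr x); set b1 := \d_(repr x).
  set a2 := \n_(repr y); set b2 := \d_(repr y).
  have h1 := dnz x; have h2 := dnz y.
  have -> : tof a1 / tof b1 + tof a2 / tof b2 = tof (a1 * b2 + a2 * b1) / tof (b1 * b2).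
    by rewrite tofD !tofM addf_div ?tnz.
  rewrite !fscale_frac ?mulf_neq0 // mscaleD !mscaleM tofD !tofM.
  by rewrite addf_div ?tnz ?Mnz.
- move=> x y; rewrite (fracE x) (fracE y) -!/(tof _).
  set a1 := \n_(repr x); set b1 := \d_(repr x).
  set a2 := \n_(repr y); set b2 := \d_(repr y).
  have h1 := dnz x; have h2 := dnz y.
  have -> : tof a1 / tof b1 * (tof a2 / tof b2) = tof (a1 * a2) / tof (b1 * b2).
    by rewrite !tofM mulf_div.
  rewrite !fscale_frac ?mulf_neq0 // !mscaleM !tofM.
  by rewrite mulf_div.
- have -> : (1 : RF n) = tof 1 / tof 1 by rewrite tof1 divr1.
  by rewrite fscale_frac ?oner_neq0 // -mpolyC1 mscaleC mpolyC1 tof1 divr1.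
- move=> c; have -> : cst n c = tof c%:MP / tof 1 by rewrite tof1 divr1.
  by rewrite fscale_frac ?oner_neq0 // -mpolyC1 !mscaleC mpolyC1 tof1 divr1.
Qed.

Lemma fscale_var r n (A : 'M[int]_(r, n)) lam i :
  in_torus lam -> fscale A lam (var i) = cst n (colchar A lam i) * var i.
Proof.
move=> ht; have -> : var i = tof 'X_i / tof 1 by rewrite tof1 divr1.
by rewrite fscale_frac ?oner_neq0 // -mpolyC1 mscaleC mpolyC1 tof1 divr1 mscaleX tofM divr1.
Qed.

Definition ex (x : (R : nzRingType)) : R := Rtrigo_def.exp x.

Lemma expD (x y : R) : ex (x + y) = ex x * ex y.
Proof. exact: exp_plus. Qed.
Lemma exp0 : ex 0 = 1.
Proof. exact: Rtrigo_def.exp_0. Qed.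

Lemma expn (x : R) (m : nat) : (ex x) ^+ m = ex (x * m%:R).
Proof.
elim: m => [|m IH]; first by rewrite expr0 mulr0n mulr0 exp0.
have -> : x * m.+1%:R = x + x * m%:R by rewrite -addn1 natrD mulrDr mulr1 addrC.
by rewrite exprS IH expD.
Qed.

Lemma exN y : ex (- y) = (ex y)^-1.
Proof. by rewrite -RinvE; exact: exp_Ropp. Qed.

Lemma expz (x : R) (z : int) : (ex x) ^ z = ex (x * z%:~R).
Proof.
case: z => m; first exact: expn.
rewrite NegzE -exprz_inv -expfV intrN mulrN exN; congr (_^-1); exact: expn.
Qed.

Lemma ex_neq0 x : ex x != 0.
Proof. by apply/eqP; exact: exp_neq_0. Qed.

Lemma ex_eq1 x : ex x = 1 -> x = 0.
Proof. move=> h; apply: exp_inv; rewrite Rtrigo_def.exp_0; exact: h. Qed.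

Lemma colchar_ex r n (A : 'M[int]_(r, n)) (v : 'I_r -> R) i :
  colchar A (fun k => ex (v k)) i = ex (\sum_k v k * (A k i)%:~R).
Proof.
rewrite /colchar /monchar.
under eq_bigr do rewrite expz.
by rewrite (big_morph ex expD exp0).
Qed.

Lemma rank_le r n (A B : 'M[int]_(r, n)) :
  (forall lam, in_torus lam -> (forall j, colchar B lam j = 1) ->
     forall i, colchar A lam i = 1) ->
  leq (zrank A) (zrank B).
Proof.
move=> H; rewrite /zrank.
set Aq := map_mx _ A; set Bq := map_mx _ B.
have sub : (kermx Bq <= kermx Aq)%MS.
  apply/row_subP => k; set v := row k (kermx Bq).
  have hv : v *m Bq = 0 by apply/sub_kermxP; exact: row_sub.
  apply/sub_kermxP.
  pose lam := fun k => ex (ratr (v 0 k)).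
  have ht : in_torus lam by move=> k'; exact: ex_neq0.
  have E : forall X : 'M[int]_(r, n), forall j, colchar X lam j =
      ex (ratr ((v *m map_mx (fun z : int => z%:~R : rat) X) 0 j)).
    move=> X j; rewrite colchar_ex; congr ex.
    rewrite mxE rmorph_sum; apply: eq_bigr => k' _.
    by rewrite rmorphM /= !mxE ratr_int.
  apply/matrixP => i j; rewrite (ord1 i) [RHS]mxE.
  have : colchar A lam j = 1.
    by apply: (H lam ht) => j'; rewrite E -/Bq hv mxE rmorph0 exp0.
  by rewrite E => /ex_eq1 /eqP; rewrite fmorph_eq0 => /eqP.
have := mxrankS sub; rewrite !mxrank_ker.
have := rank_leq_row Aq; have := rank_leq_row Bq.
lia.
Qed.

Lemma var_neq0 n (i : 'I_n) : var i != 0.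
Proof.
rewrite /var tof_eq0; apply/negP => /eqP h.
have := congr1 (mcoeff U_(i)) h; rewrite mcoeffX eqxx mcoeff0 => /eqP.
by rewrite oner_eq0.
Qed.

Lemma transfer n (phi psi : {rmorphism RF n -> RF n})
  (phi_alg : forall c : R, phi (cst n c) = cst n c)
  (psi_alg : forall c : R, psi (cst n c) = cst n c)
  (phi_psi : cancel psi phi) (psi_phi : cancel phi psi) r (A : 'M[int]_(r, n)) :
  dim_consistent phi A ->
  exists B : 'M[int]_(r, n), [/\ dim_consistent psi B, leq (zrank A) (zrank B) &
    forall lam, in_torus lam -> forall f, fscale B lam (psi f) = psi (fscale A lam f)].
Proof.
move=> /fin_all_exists [beta hbeta].
pose B : 'M[int]_(r, n) := \matrix_(k, j) beta j k.
have cB : forall lam j, colchar B lam j = monchar lam (beta j).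
  by move=> lam j; rewrite /colchar /monchar; apply: eq_bigr => k _; rewrite mxE.
have fphi := fmor_rmorph phi_alg; have fpsi := fmor_rmorph psi_alg.
have key : forall lam, in_torus lam -> forall f, fscale A lam (phi f) = phi (fscale B lam f).
  move=> lam ht.
  apply: (@fmor_uniq n (fun x => fscale A lam (phi x)) (fun x => phi (fscale B lam x))).
  - exact: fmor_comp (fscale_fmor A ht) fphi.
  - exact: fmor_comp fphi (fscale_fmor B ht).
  - by move=> j; rewrite hbeta // fscale_var // rmorphM phi_alg cB.
have comm : forall lam, in_torus lam -> forall f, fscale B lam (psi f) = psi (fscale A lam f).
  by move=> lam ht f; rewrite -{2}(phi_psi f) key // psi_phi.
exists B; split => //.
- move=> i; exists (fun k => A k i) => lam ht.
  by rewrite comm // fscale_var // rmorphM psi_alg.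
- apply: rank_le => lam ht h1 i.
  have idB : forall f, fscale B lam f = f.
    apply: (@fmor_uniq n (fscale B lam) id (fscale_fmor B ht)) => //.
    by move=> j; rewrite fscale_var // h1 /cst mpolyC1 tof1 mul1r.
  have := key lam ht (psi (var i)); rewrite idB phi_psi fscale_var // => /eqP.
  rewrite -subr_eq0 -{2}[var i]mul1r -mulrBl mulf_eq0 (negbTE (var_neq0 i)) orbF.
  rewrite subr_eq0 /cst -[1]tof1 -mpolyC1 /tof tofrac_eq mpolyC_eq => /eqP.
  by [].
Qed.

Lemma max_dir n (P Q : forall r, 'M[int]_(r, n) -> Prop) :
  (forall r A, P r A -> exists B, Q r B /\ leq (zrank A) (zrank B)) ->
  (forall r B, Q r B -> exists A, P r A /\ leq (zrank B) (zrank A)) ->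
  forall k, is_max_rank P k -> is_max_rank Q k.
Proof.
move=> hPQ hQP k [[r [A [hA <-]]] hmax]; split.
- have [B [hB le]] := hPQ r A hA; exists r, B; split => //.
  apply/eqP; rewrite eqn_leq le andbT.
  have [A' [hA' le']] := hQP r B hB; exact: leq_trans le' (hmax _ _ hA').
- move=> r' B hB; have [A' [hA' le']] := hQP r' B hB; exact: leq_trans le' (hmax _ _ hA').
Qed.

Lemma max_transfer n (P Q : forall r, 'M[int]_(r, n) -> Prop) :
  (forall r A, P r A -> exists B, Q r B /\ leq (zrank A) (zrank B)) ->
  (forall r B, Q r B -> exists A, P r A /\ leq (zrank B) (zrank A)) ->
  forall k, is_max_rank P k <-> is_max_rank Q k.
Proof. by move=> h1 h2 k; split; apply: max_dir. Qed.

Theorem mainTheorem6 (n : nat)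
  (phi : {rmorphism RF n -> RF n}) (psi : {rmorphism RF n -> RF n})
  (phi_alg : forall c : R, phi (cst n c) = cst n c)
  (psi_alg : forall c : R, psi (cst n c) = cst n c)
  (phi_psi : cancel psi phi) (psi_phi : cancel phi psi) :
  (forall k : nat,
     is_max_rank (fun r (A : 'M[int]_(r, n)) => dim_consistent phi A) k <->
     is_max_rank (fun r (B : 'M[int]_(r, n)) => dim_consistent psi B) k)
  /\
  (forall (s : nat) (F : 'I_s -> RF n) (k : nat),
     is_max_rank (fun r (A : 'M[int]_(r, n)) =>
                    dim_consistent phi A /\ fixes_all A F) k <->
     is_max_rank (fun r (B : 'M[int]_(r, n)) =>
                    dim_consistent psi B /\ fixes_all B (fun l => psi (F l))) k).
Proof.
split.
- apply: max_transfer.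
  + move=> r A hA; have [B [hB le _]] := transfer phi_alg psi_alg phi_psi psi_phi hA.
    by exists B.
  + move=> r B hB; have [A [hA le _]] := transfer psi_alg phi_alg psi_phi phi_psi hB.
    by exists A.
- move=> s F; apply: max_transfer.
  + move=> r A [hA hF]; have [B [hB le comm]] := transfer phi_alg psi_alg phi_psi psi_phi hA.
    exists B; split => //; split => // lam ht l.
    by rewrite comm // hF.
  + move=> r B [hB hH]; have [A [hA le comm]] := transfer psi_alg phi_alg psi_phi phi_psi hB.
    exists A; split => //; split => // lam ht l.
    by rewrite -(phi_psi (F l)) comm // hH.
Qed.
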